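(* Let $\gamma\in\mathbb{R}\setminus\{0,1,2,-2\}$ and $\epsilon\in\mathbb{R}$, and put $\kappa=\frac{\gamma+2}{\gamma-2}$. Let $\mathfrak g$ be the complex Lie algebra with basis $X_1,X_2,X_3,X_4,Y,Z$ and brackets \[ [X_2,X_1]=X_2+\epsilon Z,\quad [X_2,X_4]=[X_2,X_3]=[X_1,X_4]=0,\quad [X_1,X_3]=-X_3,\quad [X_3,X_4]=X_3, \] \[ [X_1,Z]=-\epsilon\,\tfrac{\gamma-2}{\gamma+2}\,Y,\quad [X_1,Y]=Y,\quad [X_2,Y]=Z,\quad [X_2,Z]=\tfrac{\gamma-2}{\gamma+2}X_2,\quad [Z,Y]=\tfrac{\gamma-2}{\gamma+2}Y, \] \[ [X_3,Y]=[X_3,Z]=[X_4,Y]=[X_4,Z]=0 . \] In the universal enveloping algebra $U(\mathfrak g)$ define $T=\sqrt{2\kappa}\,(Y+X_2)$, $S=\sqrt{2\kappa}\,(Y-X_2)$, $Z'=2\kappa Z$ and \[ C=T^2-S^2-Z'^2 . \] Then $C=4\kappa\left[2X_2Y-Z\left(\kappa Z+1\right)\right]$, and $C$ commutes (in $U(\mathfrak g)$) with each of $Y,Z,X_1,X_2,X_3,X_4$.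
   Context: The elements $T,S,Z'$ span a subalgebra isomorphic to $sl(2)$ with $[Z',T]=2S$, $[T,S]=2Z'$, $[S,Z']=-2T$, and $C$ is its Casimir element. The exclusion $\gamma\neq\pm2$ is needed only for the coefficients to be defined. In the paper this algebra arises from approximate symmetry generators of the equation $u_{tt}+\epsilon u_t=[(1+u/\gamma)^{\gamma-1}]_{xx}$, realized e.g. by $X_2=\partial_t$, $X_3=\partial_x$, $X_4=x\partial_x+\frac{2\gamma}{\gamma-2}(1+\frac u\gamma)\partial_u$, $Z=\frac{\gamma-2}{\gamma+2}t\partial_t-\frac{2\gamma}{\gamma+2}(1+\frac u\gamma)\partial_u$, $Y=\frac{\gamma-2}{\gamma+2}\frac{t^2}{2}\partial_t-\frac{2\gamma t}{\gamma+2}(1+\frac u\gamma)\partial_u$, $X_1=t\partial_t+x\partial_x+\epsilon Y$. *)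

(* Defs.v *)
From HB Require Import structures.
From mathcomp Require Import all_boot all_order all_algebra.
From mathcomp Require Import reals.
From mathcomp Require Import complex.
Set Implicit Arguments. Unset Strict Implicit. Unset Printing Implicit Defensive.
Import Order.TTheory GRing.Theory Num.Theory.
Local Open Scope ring_scope.

Definition commr (A : pzRingType) (a b : A) : A := a * b - b * a.

(* Main.v *)
Require Import Defs.
From HB Require Import structures.
From mathcomp Require Import all_boot all_order all_algebra.
From mathcomp Require Import reals.
From mathcomp Require Import complex.
From mathcomp Require Import ring.
Import Order.TTheory GRing.Theory Num.Theory.
Local Open Scope ring_scope.
Set Implicit Arguments. Unset Strict Implicit.

Section C.
Variables (K : comNzRingType) (A : algType K).
Lemma commrDl (a b c : A) : commr (a + b) c = commr a c + commr b c.
Proof. rewrite /commr mulrDl mulrDr opprD !addrA; congr (_ + _); rewrite -!addrA; congr (_ + _); by rewrite addrC. Qed.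
Lemma commrNl (a c : A) : commr (- a) c = - commr a c.
Proof. by rewrite /commr mulNr mulrN opprB opprK addrC. Qed.
Lemma commrZl (k : K) (a c : A) : commr (k *: a) c = k *: commr a c.
Proof. by rewrite /commr scalerBr -scalerAl -scalerAr. Qed.
Lemma commrMl (a b c : A) : commr (a * b) c = a * commr b c + commr a c * b.
Proof. by rewrite /commr mulrBr mulrBl !mulrA addrA subrK. Qed.
Lemma commr1l (c : A) : commr 1 c = 0.
Proof. by rewrite /commr mul1r mulr1 subrr. Qed.
Lemma mulrZ' (k : K) (a b : A) : a * (k *: b) = k *: (a * b).
Proof. by rewrite scalerAr. Qed.
Lemma mulZr' (k : K) (a b : A) : (k *: a) * b = k *: (a * b).
Proof. by rewrite scalerAl. Qed.
Lemma commrr (a : A) : commr a a = 0.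
Proof. by rewrite /commr subrr. Qed.
Lemma commrC (a b : A) : commr a b = - commr b a.
Proof. by rewrite /commr opprB. Qed.
Lemma mulr_commr (a b : A) : b * a = a * b - commr a b.
Proof. by rewrite /commr opprB addrC subrK. Qed.
End C.

Section L.
Variables (K : comNzRingType) (V : lmodType K) (a1 a2 a3 a4 a5 : V).
Definition L (p1 p2 p3 p4 p5 : K) :=
  \sum_(i < 5) (nth 0 [:: p1; p2; p3; p4; p5] i) *: (nth 0 [:: a1; a2; a3; a4; a5] i).
Lemma LD p1 p2 p3 p4 p5 q1 q2 q3 q4 q5 :
  L p1 p2 p3 p4 p5 + L q1 q2 q3 q4 q5 = L (p1+q1) (p2+q2) (p3+q3) (p4+q4) (p5+q5).
Proof.
rewrite /L -big_split; apply: eq_bigr => i _ /=; rewrite -scalerDl; congr (_ *: _).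
by case: i => [[|[|[|[|[|]]]]]].
all: by []. Qed.
Lemma LN p1 p2 p3 p4 p5 :
  - L p1 p2 p3 p4 p5 = L (-p1) (-p2) (-p3) (-p4) (-p5).
Proof.
rewrite /L -sumrN; apply: eq_bigr => i _; rewrite -scaleNr; congr (_ *: _).
by case: i => [[|[|[|[|[|]]]]]].
all: by []. Qed.
Lemma LZ (k : K) p1 p2 p3 p4 p5 :
  k *: L p1 p2 p3 p4 p5 = L (k * p1) (k * p2) (k * p3) (k * p4) (k * p5).
Proof.
rewrite /L scaler_sumr; apply: eq_bigr => i _; rewrite scalerA; congr (_ *: _).
by case: i => [[|[|[|[|[|]]]]]].
all: by []. Qed.
Lemma LE p1 p2 p3 p4 p5 q1 q2 q3 q4 q5 :
  p1 = q1 -> p2 = q2 -> p3 = q3 -> p4 = q4 -> p5 = q5 ->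
  L p1 p2 p3 p4 p5 = L q1 q2 q3 q4 q5.
Proof. by move=> -> -> -> -> ->. Qed.
Lemma Lval p1 p2 p3 p4 p5 :
  L p1 p2 p3 p4 p5 = p1 *: a1 + p2 *: a2 + p3 *: a3 + p4 *: a4 + p5 *: a5.
Proof. by rewrite /L !big_ord_recr big_ord0 /= add0r. Qed.
Lemma L1 : a1 = L 1 0 0 0 0. Proof. by rewrite Lval scale1r !scale0r !addr0. Qed.
Lemma L2 : a2 = L 0 1 0 0 0. Proof. by rewrite Lval scale1r !scale0r !addr0 add0r. Qed.
Lemma L3 : a3 = L 0 0 1 0 0. Proof. by rewrite Lval scale1r !scale0r !addr0 !add0r. Qed.
Lemma L4 : a4 = L 0 0 0 1 0. Proof. by rewrite Lval scale1r !scale0r !addr0 !add0r. Qed.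
Lemma L5 : a5 = L 0 0 0 0 1. Proof. by rewrite Lval scale1r !scale0r !addr0 !add0r. Qed.
Lemma L0 : 0 = L 0 0 0 0 0. Proof. by rewrite Lval !scale0r !addr0. Qed.
Lemma LE0 p1 p2 p3 p4 p5 :
  p1 = 0 -> p2 = 0 -> p3 = 0 -> p4 = 0 -> p5 = 0 -> L p1 p2 p3 p4 p5 = 0.
Proof. by move=> -> -> -> -> ->; rewrite -L0. Qed.
End L.

Ltac lin a1 a2 a3 a4 a5 :=
  let f := fresh "f" in
  apply/eqP; rewrite -subr_eq0 ?subr0; apply/eqP;
  pose f := L a1 a2 a3 a4 a5;
  try (rewrite [a1](_ : a1 = f 1 0 0 0 0); [| exact: (L1 a1 a2 a3 a4 a5)]);
  try (rewrite [a2](_ : a2 = f 0 1 0 0 0); [| exact: (L2 a1 a2 a3 a4 a5)]);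
  try (rewrite [a3](_ : a3 = f 0 0 1 0 0); [| exact: (L3 a1 a2 a3 a4 a5)]);
  try (rewrite [a4](_ : a4 = f 0 0 0 1 0); [| exact: (L4 a1 a2 a3 a4 a5)]);
  try (rewrite [a5](_ : a5 = f 0 0 0 0 1); [| exact: (L5 a1 a2 a3 a4 a5)]);
  rewrite /f; clear f;
  rewrite !(LN, LZ, LD); apply: LE0.

Local Open Scope complex_scope.

Theorem proposition1 (R : realType) (A : algType R[i]) (gamma eps : R)
  (hg0 : gamma != 0) (hg1 : gamma != 1) (hg2 : gamma != 2) (hgm2 : gamma != -2)
  (x1 x2 x3 x4 y z : A)
  (b21 : commr x2 x1 = x2 + (eps%:C) *: z)
  (b24 : commr x2 x4 = 0) (b23 : commr x2 x3 = 0) (b14 : commr x1 x4 = 0)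
  (b13 : commr x1 x3 = - x3) (b34 : commr x3 x4 = x3)
  (b1z : commr x1 z = (- eps * ((gamma - 2) / (gamma + 2)))%:C *: y)
  (b1y : commr x1 y = y) (b2y : commr x2 y = z)
  (b2z : commr x2 z = (((gamma - 2) / (gamma + 2))%:C) *: x2)
  (bzy : commr z y = (((gamma - 2) / (gamma + 2))%:C) *: y)
  (b3y : commr x3 y = 0) (b3z : commr x3 z = 0)
  (b4y : commr x4 y = 0) (b4z : commr x4 z = 0) :
  let kappa : R[i] := ((gamma + 2) / (gamma - 2))%:C in
  let T : A := sqrtC (2 * kappa) *: (y + x2) in
  let S : A := sqrtC (2 * kappa) *: (y - x2) in
  let Z' : A := (2 * kappa) *: z in
  let C : A := T ^+ 2 - S ^+ 2 - Z' ^+ 2 in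
  C = (4 * kappa) *: (2 *: (x2 * y) - z * (kappa *: z + 1)) /\
  (commr C y = 0 /\ commr C z = 0 /\ commr C x1 = 0 /\ commr C x2 = 0 /\
   commr C x3 = 0 /\ commr C x4 = 0).
Proof.
move=> k T S Z' C.
have hkc : k * ((gamma - 2) / (gamma + 2))%:C = 1.
  have h : (gamma + 2) / (gamma - 2) * ((gamma - 2) / (gamma + 2)) = 1.
    have Hlin1 : gamma - 2 != 0 by rewrite subr_eq0.
    have Hlin2 : gamma + 2 != 0 by rewrite addr_eq0.
    by rewrite mulrA divfK // mulfV.
  by rewrite /k -rmorphM /= h.
rewrite rmorphM rmorphN /= in b1z.
set c := ((gamma - 2) / (gamma + 2))%:C in hkc b2z bzy b1z.
set e := eps%:C in b1z b21.
have knz : k != 0.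
  apply/eqP => k0; move: hkc; rewrite k0 mul0r => /eqP; by rewrite eq_sym oner_eq0.
have hck : c = k^-1 by rewrite -(mulKf knz c) hkc mulr1.
have hyx2 : y * x2 = x2 * y - z by rewrite mulr_commr b2y.
have hyz : y * z = z * y - c *: y by rewrite mulr_commr bzy.
have hzx2 : z * x2 = x2 * z - c *: x2 by rewrite mulr_commr b2z.
have hC : C = (4 * k) *: (2 *: (x2 * y) - z * (k *: z + 1)).
  rewrite /C /T /S /Z' !exprZn sqrtCK !expr2 !(mulrDr, mulrDl, mulrN, mulNr) mulr1 -?scalerAr ?opprK hyx2.
  lin (y * y) (x2 * y) (x2 * x2) (z * z) z; ring.
split => //.
clearbody k c.
have ry1 : commr y x1 = - y by rewrite commrC b1y.
have rz1 : commr z x1 = - ((- e * c) *: y) by rewrite commrC b1z.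
have ry2 : commr y x2 = - z by rewrite commrC b2y.
have rz2 : commr z x2 = - (c *: x2) by rewrite commrC b2z.
have ryz : commr y z = - (c *: y) by rewrite commrC bzy.
have ry3 : commr y x3 = 0 by rewrite commrC b3y oppr0.
have rz3 : commr z x3 = 0 by rewrite commrC b3z oppr0.
have ry4 : commr y x4 = 0 by rewrite commrC b4y oppr0.
have rz4 : commr z x4 = 0 by rewrite commrC b4z oppr0.
rewrite hC.
do ![split|]; rewrite !(commrZl, commrDl, commrNl, commrMl, commr1l, commrr);
  rewrite ?(ry1, rz1, ry2, rz2, ryz, ry3, rz3, ry4, rz4, b21, b24, b23, b2y, b2z, bzy);
  rewrite ?(mulr0, mul0r, mulr1, mul1r, mulrN, mulNr, mulrDr, mulrDl, addr0, add0r, oppr0, scaler0, mulrZ', mulZr', hyz, hyx2, hzx2).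
- lin (z * y) y x3 x3 x3; by rewrite ?hck; field.
- lin (x2 * y) x3 x3 x3 x3; by rewrite ?hck; field.
- lin (x2 * y) (z * y) y x3 x3; by rewrite ?hck; field.
- lin (x2 * z) x2 x3 x3 x3; by rewrite ?hck; field.
all: by []. Qed.
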